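(* There exists a (non-linear) kernel $g$ of dimension $16$ whose partial distance sequence is $(D_{min}^{(0)},\dots,D_{min}^{(15)})=(1,2,2,2,2,4,4,4,6,6,6,8,8,8,8,16)$; consequently $E_{16}\ge E(g)=\frac1{16}\sum_{i=0}^{15}\log_{16}D_{min}^{(i)}\approx0.52742$.
   Context: A kernel of dimension $\ell$ is a bijection $g:\{0,1\}^\ell\to\{0,1\}^\ell$. ${\bf a}\bullet{\bf b}$ denotes concatenation, $d_H$ Hamming distance. Partial distances: $D_{min}^{(i)}=\min\{d_H(g({\bf w}\bullet 0\bullet{\bf u}),g({\bf w}\bullet 1\bullet {\bf v})) : {\bf w}\in\{0,1\}^i,\ {\bf u},{\bf v}\in\{0,1\}^{\ell-i-1}\}$, $i=0,\dots,\ell-1$; exponent $E(g)=\frac1\ell\sum_{i=0}^{\ell-1}\log_\ell D_{min}^{(i)}$; $E_\ell=\max_g E(g)$ over all kernels of dimension $\ell$. *)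

(* Defs.v *)
From Stdlib Require Import Reals.
From mathcomp Require Import all_boot.
(* ssreflect rebinds the %R key; give R_scope the key %Re. *)
Delimit Scope R_scope with Re.
Set Implicit Arguments. Unset Strict Implicit. Unset Printing Implicit Defensive.

Definition word (l : nat) := {ffun 'I_l -> bool}.

Definition kernel (l : nat) (g : word l -> word l) : Prop := bijective g.

Definition dH (l : nat) (x y : word l) : nat := #|[pred j : 'I_l | x j != y j]|.

(* x = w.0.u and y = w.1.v for some w of length i (i.e. x,y share the
   first i bits, x_i = 0, y_i = 1). *)
Definition split_pair (l : nat) (i : 'I_l) (x y : word l) : bool :=
  [forall j : 'I_l, (j < i)%N ==> (x j == y j)] && (x i == false) && (y i == true).

(* Partial distance D_min^(i).  The set of pairs is always nonempty, and all
   distances are <= l, so using l as the neutral element of minn is harmless. *)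
Definition Dmin (l : nat) (g : word l -> word l) (i : 'I_l) : nat :=
  \big[minn/l]_(x : word l) \big[minn/l]_(y : word l | split_pair i x y) dH (g x) (g y).

Definition exponent (l : nat) (g : word l -> word l) : R :=
  (/ INR l * \big[Rplus/0%Re]_(i < l) (ln (INR (Dmin g i)) / ln (INR l)))%Re.

(* E_l = max over all kernels of dimension l (finite max; exponents of
   kernels are >= 0, so 0 is a harmless neutral element). *)
Definition E_max (l : nat) : R :=
  \big[Rmax/0%Re]_(g : {ffun word l -> word l} | injectiveb g) exponent g.

(* Main.v *)
Require Import Defs.
From Stdlib Require Import Reals Lra.
From mathcomp Require Import all_boot.
Set Implicit Arguments. Unset Strict Implicit. Unset Printing Implicit Defensive.
Definition ROWS : seq (seq bool) := [:: [:: false; false; false; false; false; false; false; false; false; false; false; false; false; false; false; true];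
  [:: false; false; false; false; false; false; false; false; false; false; false; false; false; false; true; true];
  [:: false; false; false; false; false; false; false; false; false; false; false; false; false; true; false; true];
  [:: false; false; false; false; false; false; false; false; false; false; false; true; false; false; false; true];
  [:: false; false; false; false; false; false; false; true; false; false; false; false; false; false; false; true];
  [:: false; false; false; true; false; false; false; true; false; false; false; true; false; false; false; true];
  [:: false; false; false; false; false; true; false; true; false; false; false; false; false; true; false; true];
  [:: false; false; false; false; false; false; false; false; false; true; false; true; false; true; false; true];
  [:: false; false; false; false; false; false; false; false; false; false; false; false; false; false; false; false];
  [:: false; false; false; false; false; false; false; false; false; false; false; false; false; false; false; false];
  [:: false; false; false; false; false; false; false; false; false; false; false; false; false; false; false; false];
  [:: false; true; false; true; false; true; false; true; false; true; false; true; false; true; false; true];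
  [:: false; false; true; true; false; false; true; true; false; false; true; true; false; false; true; true];
  [:: false; false; false; false; true; true; true; true; false; false; false; false; true; true; true; true];
  [:: false; false; false; false; false; false; false; false; true; true; true; true; true; true; true; true];
  [:: true; true; true; true; true; true; true; true; true; true; true; true; true; true; true; true]].
Definition CS : seq (seq bool) := [:: [:: false; false; false; false; false; false; false; false; false; false; false; false; false; false; false; false];
  [:: false; false; false; false; false; false; true; true; false; true; false; true; false; true; true; false];
  [:: false; false; false; false; false; true; false; true; false; true; true; false; false; false; true; true];
  [:: false; false; false; true; false; true; true; true; false; false; true; false; false; true; false; false];
  [:: false; false; false; true; false; true; false; false; false; true; false; false; true; true; true; false];
  [:: false; false; false; true; false; false; true; false; false; false; false; true; true; true; false; true];
  [:: false; false; false; true; false; false; false; true; false; true; true; true; true; false; false; false];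
  [:: false; false; false; false; false; true; true; false; false; false; true; true; true; false; true; false]].
Definition WIT : seq (seq bool * seq bool) := [:: ([:: false; false; false; false; false; false; false; false; false; false; false; false; false; false; false; false], [:: true; false; false; false; false; false; false; false; false; false; false; false; false; false; false; false]);
  ([:: false; false; false; false; false; false; false; false; false; false; false; false; false; false; false; false], [:: false; true; false; false; false; false; false; false; false; false; false; false; false; false; false; false]);
  ([:: false; false; false; false; false; false; false; false; false; false; false; false; false; false; false; false], [:: false; false; true; false; false; false; false; false; false; false; false; false; false; false; false; false]);
  ([:: false; false; false; false; false; false; false; false; false; false; false; false; false; false; false; false], [:: false; false; false; true; false; false; false; false; false; false; false; false; false; false; false; false]);
  ([:: false; false; false; false; false; false; false; false; false; false; false; false; false; false; false; false], [:: false; false; false; false; true; false; false; false; false; false; false; false; false; false; false; false]);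
  ([:: false; false; false; false; false; false; false; false; false; false; false; false; false; false; false; false], [:: false; false; false; false; false; true; false; false; false; false; false; false; false; false; false; false]);
  ([:: false; false; false; false; false; false; false; false; false; false; false; false; false; false; false; false], [:: false; false; false; false; false; false; true; false; false; false; false; false; false; false; false; false]);
  ([:: false; false; false; false; false; false; false; false; false; false; false; false; false; false; false; false], [:: false; false; false; false; false; false; false; true; false; false; false; false; false; false; false; false]);
  ([:: false; false; false; false; false; false; false; false; false; false; false; false; false; false; false; false], [:: false; false; false; false; false; false; false; false; true; false; false; false; false; false; false; false]);
  ([:: false; false; false; false; false; false; false; false; false; false; false; false; false; false; false; false], [:: false; false; false; false; false; false; false; false; false; true; false; false; false; false; false; false]);
  ([:: false; false; false; false; false; false; false; false; false; false; false; false; false; false; false; false], [:: false; false; false; false; false; false; false; false; false; false; true; false; false; false; false; false]);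
  ([:: false; false; false; false; false; false; false; false; false; false; false; false; false; false; false; false], [:: false; false; false; false; false; false; false; false; false; false; false; true; false; false; false; false]);
  ([:: false; false; false; false; false; false; false; false; false; false; false; false; false; false; false; false], [:: false; false; false; false; false; false; false; false; false; false; false; false; true; false; false; false]);
  ([:: false; false; false; false; false; false; false; false; false; false; false; false; false; false; false; false], [:: false; false; false; false; false; false; false; false; false; false; false; false; false; true; false; false]);
  ([:: false; false; false; false; false; false; false; false; false; false; false; false; false; false; false; false], [:: false; false; false; false; false; false; false; false; false; false; false; false; false; false; true; false]);
  ([:: false; false; false; false; false; false; false; false; false; false; false; false; false; false; false; false], [:: false; false; false; false; false; false; false; false; false; false; false; false; false; false; false; true])].
Definition zero16 : seq bool := nseq 16 false.
Definition xorv (a b : seq bool) : seq bool := [seq p.1 (+) p.2 | p <- zip a b].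
Fixpoint linr (s : seq bool) (rows : seq (seq bool)) : seq bool :=
  match s, rows with
  | b :: s', r :: rows' => if b then xorv r (linr s' rows') else linr s' rows'
  | _, _ => zero16
  end.
Definition jnb (b8 b9 b10 : bool) : nat := b8 + 2 * b9 + 4 * b10.
Definition Cn (j : nat) : seq bool := nth zero16 CS j.
Definition DL : seq nat := [:: 1; 2; 2; 2; 2; 4; 4; 4; 6; 6; 6; 8; 8; 8; 8; 16].
Fixpoint allseqs (n : nat) : seq (seq bool) :=
  if n is n'.+1 then [seq b :: s | b <- [:: false; true], s <- allseqs n'] else [:: [::]].
Definition leafok (d L : seq bool) (b8 b9 b10 : bool) : bool :=
  let i := find id d in
  (i < 16) ==> (nth 0 DL i <= count id (xorv L (xorv (Cn (jnb b8 b9 b10))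
      (Cn (jnb (b8 (+) nth false d 8) (b9 (+) nth false d 9) (b10 (+) nth false d 10)))))).
Definition dok (d : seq bool) : bool :=
  let L := linr d ROWS in
  all (fun b8 => all (fun b9 => all (fun b10 => leafok d L b8 b9 b10) [:: false; true]) [:: false; true]) [:: false; true].
Definition chk : bool := all dok (allseqs 16).

Lemma size_xorv a b : size (xorv a b) = minn (size a) (size b).
Proof. by rewrite size_map size_zip. Qed.

Lemma nth_xorv a b k : size a = size b ->
  nth false (xorv a b) k = nth false a k (+) nth false b k.
Proof.
move=> Hs; case: (ltnP k (size a)) => Hk.
  rewrite (nth_map (false, false)); last by rewrite size_zip -Hs minnn.
  by rewrite nth_zip.
by rewrite !nth_default // ?size_xorv -?Hs ?minnn.
Qed.

Lemma size_zero16 : size zero16 = 16. Proof. by []. Qed.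

Lemma size_linr s rows : all (fun r => size r == 16) rows -> size (linr s rows) = 16.
Proof.
elim: rows s => [|r rows IH] [|b s] //= /andP [/eqP Hr Ha].
case: b; last exact: IH.
by rewrite size_xorv Hr IH.
Qed.

Lemma nth_zero16 k : nth false zero16 k = false.
Proof. by rewrite nth_nseq; case: ifP. Qed.

Lemma linr_xor rows a b k : all (fun r => size r == 16) rows -> size a = size b ->
  nth false (linr (xorv a b) rows) k =
  nth false (linr a rows) k (+) nth false (linr b rows) k.
Proof.
elim: rows a b => [|r rows IH] [|x a] [|y b] //=; try by rewrite nth_zero16.
move=> /andP [/eqP Hr Ha] [Hs].
have HL := size_linr _ Ha.
rewrite -/(xorv a b).
case: x; case: y => /=; rewrite ?nth_xorv ?HL ?Hr ?IH //;
  by case: (nth false r k); case: (nth false (linr a rows) k);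
     case: (nth false (linr b rows) k).
Qed.

Lemma card_nth v : size v = 16 -> #|[pred k : 'I_16 | nth false v k]| = count id v.
Proof.
move=> Hv.
rewrite cardE /enum_mem size_filter -enumT.
rewrite -[in RHS](mkseq_nth false v) /mkseq Hv -val_enum_ord -map_comp count_map.
by apply: eq_count => k.
Qed.

Lemma chk_ok : chk = true. Proof. vm_compute. reflexivity. Qed.

Definition lst (x : word 16) : seq bool := map x (enum 'I_16).
Lemma size_lst x : size (lst x) = 16.
Proof. by rewrite size_map size_enum_ord. Qed.
Lemma nth_lst x (k : 'I_16) : nth false (lst x) (nat_of_ord k) = x k.
Proof. by rewrite (nth_map ord0) ?size_enum_ord ?nth_ord_enum. Qed.

Definition jn (s : seq bool) := jnb (nth false s 8) (nth false s 9) (nth false s 10).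
Definition gl (s : seq bool) := xorv (linr s ROWS) (Cn (jn s)).
Definition gk (x : word 16) : word 16 := [ffun k : 'I_16 => nth false (gl (lst x)) k].

Lemma rows_ok : all (fun r => size r == 16) ROWS. Proof. by []. Qed.
Lemma size_Cn j : size (Cn j) = 16.
Proof.
rewrite /Cn; case: (ltnP j (size CS)) => H; last by rewrite nth_default.
have : nth zero16 CS j \in CS := mem_nth _ H.
by have /allP := (erefl true : all (fun r => size r == 16) CS = true) => A /A /eqP.
Qed.

Lemma dH_gk x y : dH (gk x) (gk y) =
  count id (xorv (linr (xorv (lst x) (lst y)) ROWS) (xorv (Cn (jn (lst x))) (Cn (jn (lst y))))).
Proof.
rewrite /dH -card_nth; last by rewrite !size_xorv size_linr ?rows_ok // !size_Cn.
apply: eq_card => k; rewrite !inE !ffunE negb_eqb /gl.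
rewrite !nth_xorv ?size_linr ?size_Cn ?rows_ok ?size_xorv ?size_Cn //.
rewrite linr_xor ?rows_ok ?size_lst //.
by rewrite addbACA.
Qed.

Lemma mem_allseqs n s : size s = n -> s \in allseqs n.
Proof.
elim: n s => [|n IH] [|b s] //= [Hs].
by rewrite !mem_cat; case: b; rewrite ?mem_map ?IH ?orbT // => u v [].
Qed.

Lemma lb x y : let d := xorv (lst x) (lst y) in
  find id d < 16 -> nth 0 DL (find id d) <= dH (gk x) (gk y).
Proof.
move=> d Hf.
have Hd : d \in allseqs 16 by apply: mem_allseqs; rewrite size_xorv !size_lst.
have mb : forall b : bool, b \in [:: false; true] by case.
move: chk_ok; rewrite /chk => /allP /(_ d Hd).
rewrite /dok => /allP /(_ _ (mb (nth false (lst x) 8))) /allP /(_ _ (mb (nth false (lst x) 9)))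
  /allP /(_ _ (mb (nth false (lst x) 10))).
rewrite /leafok Hf /= => H.
rewrite dH_gk; apply: (leq_trans H) => {H}.
rewrite /d !nth_xorv ?size_lst // !addKb.
by [].
Qed.

Lemma find_eq (d : seq bool) i : (forall j, j < i -> nth false d j = false) ->
  nth false d i = true -> find id d = i.
Proof.
elim: d i => [|b d IH] [|i] /= H1 H2 //.
  by rewrite H2.
have := H1 0 isT => /= ->.
by rewrite (IH i) // => j Hj; apply: (H1 j.+1).
Qed.

Lemma split_find (i : 'I_16) x y : split_pair i x y -> find id (xorv (lst x) (lst y)) = i.
Proof.
case/andP => /andP [/forallP Hf /eqP Hx] /eqP Hy.
apply: find_eq.
  move=> j Hj; have Hj16 : j < 16 := ltn_trans Hj (ltn_ord i).
  rewrite nth_xorv ?size_lst // -[j]/(nat_of_ord (Ordinal Hj16)) !nth_lst.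
  by have /implyP /(_ Hj) /eqP -> := Hf (Ordinal Hj16); rewrite addbb.
by rewrite nth_xorv ?size_lst // !nth_lst Hx Hy.
Qed.

Lemma DL_pos j : j < 16 -> 0 < nth 0 DL j.
Proof. by do 16! (case: j => [//|j]). Qed.

Lemma gk_inj : injective gk.
Proof.
move=> x y E.
set d := xorv (lst x) (lst y).
case: (ltnP (find id d) 16) => Hf.
  have := lb Hf; rewrite E /dH.
  have -> : #|[pred j | gk y j != gk y j]| = 0 by apply: eq_card0 => j; rewrite !inE eqxx.
  by rewrite leqn0 => /eqP H; have := DL_pos Hf; rewrite H.
have Hn : ~~ has id d by rewrite has_find size_xorv !size_lst minnn -leqNgt.
apply/ffunP => k.
have : nth false d k = false.
  apply: negbTE; apply: (hasPn Hn); apply: mem_nth; by rewrite size_xorv !size_lst.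
by rewrite /d nth_xorv ?size_lst // !nth_lst; case: (x k); case: (y k).
Qed.

Definition mkw (s : seq bool) : word 16 := [ffun k : 'I_16 => nth false s k].
Definition witx (i : nat) := mkw (nth ([::], [::]) WIT i).1.
Definition wity (i : nat) := mkw (nth ([::], [::]) WIT i).2.

Definition splitl (i : nat) (a b : seq bool) : bool :=
  all (fun j => nth false a j == nth false b j) (iota 0 i) && ~~ nth false a i && nth false b i.
Definition wa i := (nth ([::], [::]) WIT i).1.
Definition wb i := (nth ([::], [::]) WIT i).2.
Definition leafv (a b : seq bool) :=
  count id (xorv (linr (xorv a b) ROWS) (xorv (Cn (jn a)) (Cn (jn b)))).

Lemma wit_list : all (fun i => splitl i (wa i) (wb i) && (leafv (wa i) (wb i) == nth 0 DL i)
   && (size (wa i) == 16) && (size (wb i) == 16)) (iota 0 16).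
Proof. vm_compute. reflexivity. Qed.

Lemma lst_mkw a : size a = 16 -> lst (mkw a) = a.
Proof.
move=> Ha; apply: (@eq_from_nth _ false); first by rewrite size_lst Ha.
move=> j; rewrite size_lst => Hj.
by rewrite -[j]/(nat_of_ord (Ordinal Hj)) nth_lst ffunE.
Qed.

Lemma splitl_ok (i : 'I_16) x y : splitl i (lst x) (lst y) -> split_pair i x y.
Proof.
case/andP => /andP [/allP H Hx] Hy.
rewrite /split_pair !nth_lst in Hx Hy *.
rewrite (negbTE Hx) Hy !andbT; apply/forallP => j; apply/implyP => Hj.
by have := H j; rewrite mem_iota add0n Hj !nth_lst => /(_ isT).
Qed.

Lemma wit_ok (i : 'I_16) : split_pair i (witx i) (wity i) &&
   (dH (gk (witx i)) (gk (wity i)) == nth 0 DL i).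
Proof.
have := allP wit_list i; rewrite mem_iota add0n ltn_ord => /(_ isT).
case/andP => /andP [/andP [Hs Hd] /eqP Ha] /eqP Hb.
rewrite /witx /wity -/(wa i) -/(wb i) dH_gk !lst_mkw // -/(leafv _ _) Hd andbT.
by apply: splitl_ok; rewrite !lst_mkw.
Qed.

Lemma bigmin_le (T : eqType) (s : seq T) (P : pred T) (F : T -> nat) x0 :
  x0 \in s -> P x0 -> \big[minn/16]_(x <- s | P x) F x <= F x0.
Proof.
move=> Hx HP; elim: s Hx => // a s IH; rewrite inE big_cons.
case/orP => [/eqP <-|/IH H]; first by rewrite HP geq_minl.
by case: (P a) => //; apply: leq_trans H; rewrite geq_minr.
Qed.

Lemma DL_le16 j : j < 16 -> nth 0 DL j <= 16.
Proof. by do 16! (case: j => [//|j]). Qed.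

Lemma Dmin_gk (i : 'I_16) : Dmin gk i = nth 0 DL i.
Proof.
apply/eqP; rewrite eqn_leq; apply/andP; split.
  have /andP [Hs /eqP Hd] := wit_ok i.
  rewrite -Hd /Dmin.
  apply: (leq_trans (@bigmin_le _ _ (fun=> true) (fun x => \big[minn/16]_(y | split_pair i x y) dH (gk x) (gk y)) (witx i) (mem_index_enum (witx i)) isT)).
  exact: (@bigmin_le _ _ (split_pair i (witx i)) (fun y => dH (gk (witx i)) (gk y)) _ (mem_index_enum (wity i)) Hs).
rewrite /Dmin.
apply: (big_ind (fun v => nth 0 DL i <= v)); first exact: DL_le16.
  by move=> a b Ha Hb; rewrite leq_min Ha Hb.
move=> x _.
apply: (big_ind (fun v => nth 0 DL i <= v)); first exact: DL_le16.
  by move=> a b Ha Hb; rewrite leq_min Ha Hb.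
move=> y Hs.
have := split_find Hs => Hf.
by move: (@lb x y); rewrite /= Hf => /(_ (ltn_ord i)).
Qed.

Lemma Dmin_seq : [seq Dmin gk i | i <- enum 'I_16] = DL.
Proof.
rewrite (eq_map Dmin_gk).
have -> : [seq nth 0 DL (nat_of_ord i) | i <- enum 'I_16] = map (nth 0 DL) (map val (enum 'I_16)).
  by rewrite -map_comp.
by rewrite val_enum_ord.
Qed.

Section RealPart.
Local Open Scope R_scope.

Lemma ln3_lo : 84 * ln 2 < 53 * ln 3.
Proof.
have H : 2 ^ 84 < 3 ^ 53.
  rewrite !pow_IZR; apply: IZR_lt; vm_compute; reflexivity.
have := ln_increasing _ _ (pow_lt 2 84 ltac:(lra)) H.
rewrite !ln_pow; try lra.
have -> : INR 84 = 84 by rewrite INR_IZR_INZ.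
have -> : INR 53 = 53 by rewrite INR_IZR_INZ.
lra.
Qed.

Lemma ln3_hi : 94 * ln 3 < 149 * ln 2.
Proof.
have H : 3 ^ 94 < 2 ^ 149.
  rewrite !pow_IZR; apply: IZR_lt; vm_compute; reflexivity.
have := ln_increasing _ _ (pow_lt 3 94 ltac:(lra)) H.
rewrite !ln_pow; try lra.
have -> : INR 94 = 94 by rewrite INR_IZR_INZ.
have -> : INR 149 = 149 by rewrite INR_IZR_INZ.
lra.
Qed.

Lemma ln2_pos : 0 < ln 2.
Proof. rewrite -ln_1; apply: ln_increasing; lra. Qed.

Lemma lnmul x y : 0 < x -> 0 < y -> ln (x * y) = ln x + ln y.
Proof. move=> Hx Hy; exact: ln_mult. Qed.

Lemma sum_val :
  \big[Rplus/0]_(d <- map INR [:: 1; 2; 2; 2; 2; 4; 4; 4; 6; 6; 6; 8; 8; 8; 8; 16]%N) (ln d / ln 16)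
  = (29 * ln 2 + 3 * ln 3) / (4 * ln 2).
Proof.
have e1 : ln (INR 1) = 0 by rewrite /= ln_1.
have e2 : ln (INR 2) = ln 2 by rewrite INR_IZR_INZ.
have e4 : ln (INR 4) = 2 * ln 2.
  rewrite INR_IZR_INZ (_ : IZR (Z.of_nat 4) = 2 * 2); last by simpl; lra.
  rewrite lnmul; lra.
have e6 : ln (INR 6) = ln 2 + ln 3.
  rewrite INR_IZR_INZ (_ : IZR (Z.of_nat 6) = 2 * 3); last by simpl; lra.
  rewrite lnmul; lra.
have e8 : ln (INR 8) = 3 * ln 2.
  rewrite INR_IZR_INZ (_ : IZR (Z.of_nat 8) = 2 * (2 * 2)); last by simpl; lra.
  rewrite !lnmul; lra.
have e16 : ln 16 = 4 * ln 2.
  rewrite (_ : 16 = (2 * 2) * (2 * 2)); last lra.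
  rewrite !lnmul; lra.
rewrite !big_cons big_nil; cbv beta iota.
have e16' : ln (INR 16) = 4 * ln 2 by rewrite INR_IZR_INZ.
rewrite e1 e2 e4 e6 e8 e16 e16'.
field; have := ln2_pos; lra.
Qed.

Lemma div_lt a c b : 0 < b -> a * b < c -> a < c / b.
Proof. move=> Hb H; apply: (Rmult_lt_reg_r b) => //; field_simplify; lra. Qed.

Lemma div_gt a c b : 0 < b -> c < a * b -> c / b < a.
Proof. move=> Hb H; apply: (Rmult_lt_reg_r b) => //; field_simplify; lra. Qed.

Lemma num_bound : 0.52741 < / 16 * ((29 * ln 2 + 3 * ln 3) / (4 * ln 2)) < 0.52743.
Proof.
have H2 := ln2_pos; have H3 := ln3_lo; have H4 := ln3_hi.
have -> : / 16 * ((29 * ln 2 + 3 * ln 3) / (4 * ln 2)) = (29 * ln 2 + 3 * ln 3) / (64 * ln 2).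
  field; lra.
split; [apply: div_lt | apply: div_gt]; lra.
Qed.

End RealPart.

Section Final.
Local Open Scope R_scope.

Lemma bigmax_ge (T : eqType) (s : seq T) (P : pred T) (F : T -> R) x0 :
  x0 \in s -> P x0 -> F x0 <= \big[Rmax/0]_(x <- s | P x) F x.
Proof.
move=> Hx HP; elim: s Hx => // a s IH; rewrite inE big_cons.
case/orP => [/eqP <-|/IH H]; first by rewrite HP; apply: Rmax_l.
case: (P a) => //; apply: (Rle_trans _ _ _ H); apply: Rmax_r.
Qed.

Lemma exponent_ffun : exponent (finfun gk) = exponent gk.
Proof.
rewrite /exponent; congr (_ * _); apply: eq_bigr => i _.
rewrite /Dmin; do 3 f_equal.
apply: eq_bigr => x _; apply: eq_bigr => y _; by rewrite !ffunE.
Qed.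

Lemma Emax_ge : E_max 16 >= exponent gk.
Proof.
apply: Rle_ge; rewrite /E_max -exponent_ffun.
apply: (@bigmax_ge _ _ (fun g : {ffun word 16 -> word 16} => injectiveb g) (fun g => exponent g)).
  exact: mem_index_enum.
apply/injectiveP => x y; rewrite !ffunE; exact: gk_inj.
Qed.

Lemma exp_gk : exponent gk = / 16 * \big[Rplus/0]_(d <- map INR [:: 1; 2; 2; 2; 2; 4; 4; 4; 6; 6; 6; 8; 8; 8; 8; 16]%N)
                    (ln d / ln 16).
Proof.
have E16 : INR 16 = 16 by rewrite INR_IZR_INZ.
rewrite /exponent E16; congr (_ * _).
rewrite (eq_bigr (fun i : 'I_16 => ln (INR (nth 0%N DL i)) / ln 16)); last first.
  by move=> i _; rewrite Dmin_gk.
rewrite -(big_mkord xpredT (fun j => ln (INR (nth 0%N DL j)) / ln 16)).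
rewrite -(big_map (nth 0%N DL) xpredT (fun j => ln (INR j) / ln 16)).
have -> : map (nth 0%N DL) (index_iota 0 16) = DL by [].
by rewrite [RHS]big_map.
Qed.

End Final.

Theorem mainTheorem11 :
  exists g : word 16 -> word 16,
    kernel g /\
    [seq Dmin g i | i <- enum 'I_16] = [:: 1; 2; 2; 2; 2; 4; 4; 4; 6; 6; 6; 8; 8; 8; 8; 16]%N /\
    (E_max 16 >= exponent g)%Re /\
    exponent g = (/ 16 * \big[Rplus/0%Re]_(d <- map INR [:: 1; 2; 2; 2; 2; 4; 4; 4; 6; 6; 6; 8; 8; 8; 8; 16]%N)
                    (ln d / ln 16))%Re /\
    (0.52741 < exponent g < 0.52743)%Re.
Proof.
exists gk; split; first exact: injF_bij gk_inj.
split; first exact: Dmin_seq.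
split; first exact: Emax_ge.
split; first exact: exp_gk.
rewrite exp_gk sum_val; exact: num_bound.
Qed.
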